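(* Let $0<q<1$, $\alpha>-1$, let $n\ge0$ be an integer, and let $\lambda_s$ be the smallest eigenvalue of $\left((q^{\alpha+1};q)_{j+k}\,q^{-\binom{j+k+1}{2}-\alpha(j+k)}\right)_{j,k=0}^{n}$. Then \[ \lambda_s\ \ge\ \left(\sum_{m=0}^{n}\frac{q^m}{(q;q)_m\,(q^{\alpha+1};q)_m}\right)^{-1}. \] Moreover, with $\ell_m^{(\alpha)}(x;q)=(-1)^m\sqrt{\frac{(q^{\alpha+1};q)_m q^m}{(q;q)_m}}\sum_{k=0}^{m}\frac{(q^{-m};q)_k\,q^{\binom{k+1}{2}}q^{(\alpha+m)k}x^k}{(q;q)_k(q^{\alpha+1};q)_k}$, one has $\big(\ell_m^{(\alpha)}(-1;q)\big)^2=\frac{q^m}{(q;q)_m(q^{\alpha+1};q)_m}$ for every $m\ge0$.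
   Context: $(a;q)_m=\prod_{i=0}^{m-1}(1-aq^i)$ for integers $m\ge0$ (empty product $=1$). *)

(* Defs.v *)
From Stdlib Require Import Reals.
Open Scope R_scope.

Fixpoint qpoch (a q : R) (m : nat) : R :=
  match m with
  | O => 1
  | S m' => qpoch a q m' * (1 - a * q ^ m')
  end.

Definition choose2 (N : nat) : R := INR N * (INR N - 1) / 2.

(* The (n+1)x(n+1) matrix, indexed by j,k in {0..n} (entries given for all j,k):
   A_{jk} = (q^{alpha+1};q)_{j+k} q^{-binom(j+k+1,2) - alpha (j+k)} *)
Definition hankelA (q alpha : R) (j k : nat) : R :=
  qpoch (Rpower q (alpha + 1)) q (j + k)
  * Rpower q (- choose2 (j + k + 1) - alpha * INR (j + k)).

Definition is_eigenvalue (n : nat) (A : nat -> nat -> R) (lam : R) : Prop :=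
  exists v : nat -> R,
    (exists i, (i <= n)%nat /\ v i <> 0) /\
    forall j, (j <= n)%nat -> sum_f_R0 (fun k => A j k * v k) n = lam * v j.

Definition is_smallest_eigenvalue (n : nat) (A : nat -> nat -> R) (lam : R) : Prop :=
  is_eigenvalue n A lam /\ forall mu, is_eigenvalue n A mu -> lam <= mu.

Definition ell (q alpha : R) (m : nat) (x : R) : R :=
  (-1) ^ m
  * sqrt (qpoch (Rpower q (alpha + 1)) q m * q ^ m / qpoch q q m)
  * sum_f_R0 (fun k =>
      qpoch (Rpower q (- INR m)) q k * Rpower q (choose2 (k + 1))
      * Rpower q ((alpha + INR m) * INR k) * x ^ k
      / (qpoch q q k * qpoch (Rpower q (alpha + 1)) q k)) m.

(* Main.v *)
Require Import Defs.
From Stdlib Require Import Reals Lra Lia Arith.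
Open Scope R_scope.

Lemma sum_swap (f : nat -> nat -> R) (N M : nat) :
  sum_f_R0 (fun i => sum_f_R0 (fun j => f i j) M) N =
  sum_f_R0 (fun j => sum_f_R0 (fun i => f i j) N) M.
Proof.
  induction N as [|N IH]; simpl.
  - reflexivity.
  - rewrite IH, <- sum_plus. reflexivity.
Qed.

Lemma sum_scal_l (f : nat -> R) (c : R) (N : nat) :
  sum_f_R0 (fun i => c * f i) N = c * sum_f_R0 f N.
Proof.
  rewrite scal_sum. apply sum_eq. intros; ring.
Qed.

Lemma sum_zero_beyond (f : nat -> R) (m N : nat) :
  (m <= N)%nat -> (forall k, (m < k <= N)%nat -> f k = 0) ->
  sum_f_R0 f N = sum_f_R0 f m.
Proof.
  induction N as [|N IH]; intros Hm H.
  - assert (m = 0%nat) by lia. subst. reflexivity.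
  - destruct (Nat.eq_dec m (S N)) as [E|E].
    + subst. reflexivity.
    + rewrite tech5, IH by (try lia; intros; apply H; lia).
      rewrite (H (S N)) by lia. ring.
Qed.

Lemma sum_single (f : nat -> R) (k0 N : nat) :
  (k0 <= N)%nat -> (forall k, (k <= N)%nat -> k <> k0 -> f k = 0) ->
  sum_f_R0 f N = f k0.
Proof.
  induction N as [|N IH]; intros Hk H.
  - assert (k0 = 0%nat) by lia. subst. reflexivity.
  - rewrite tech5. destruct (Nat.eq_dec k0 (S N)) as [E|E].
    + subst. rewrite (sum_eq _ (fun _ => 0)).
      * clear. assert (sum_f_R0 (fun _ : nat => 0) N = 0).
        { induction N; simpl; [lra| rewrite IHN; lra]. }
        lra.
      * intros; apply H; lia.
    + rewrite IH by (try lia; intros; apply H; lia).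
      rewrite (H (S N)) by lia. ring.
Qed.

Lemma sum_nonneg (f : nat -> R) (N : nat) :
  (forall k, (k <= N)%nat -> 0 <= f k) -> 0 <= sum_f_R0 f N.
Proof.
  induction N as [|N IH]; intros H; simpl.
  - apply H; lia.
  - assert (0 <= f (S N)) by (apply H; lia).
    assert (0 <= sum_f_R0 f N) by (apply IH; intros; apply H; lia). lra.
Qed.

Lemma sum_sq_le (y : nat -> R) (N : nat) :
  (forall k, (k <= N)%nat -> 0 <= y k) ->
  sum_f_R0 (fun k => y k ^ 2) N <= (sum_f_R0 y N) ^ 2.
Proof.
  induction N as [|N IH]; intros H; simpl.
  - lra.
  - assert (0 <= y (S N)) by (apply H; lia).
    assert (0 <= sum_f_R0 y N) by (apply sum_nonneg; intros; apply H; lia).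
    assert (sum_f_R0 (fun k => y k ^ 2) N <= (sum_f_R0 y N) ^ 2)
      by (apply IH; intros; apply H; lia).
    simpl in *. nra.
Qed.

Lemma cauchy_schwarz (x y : nat -> R) (N : nat) :
  (sum_f_R0 (fun i => x i * y i) N) ^ 2 <=
  sum_f_R0 (fun i => x i ^ 2) N * sum_f_R0 (fun i => y i ^ 2) N.
Proof.
  induction N as [|N IH].
  - simpl. nra.
  - rewrite !tech5. set (Sm := sum_f_R0 (fun i => x i * y i) N) in *.
    set (X := sum_f_R0 (fun i => x i ^ 2) N) in *.
    set (Y := sum_f_R0 (fun i => y i ^ 2) N) in *.
    assert (HX : 0 <= X) by (apply sum_nonneg; intros; apply pow2_ge_0).
    assert (HY : 0 <= Y) by (apply sum_nonneg; intros; apply pow2_ge_0).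
    set (a := x (S N)) in *. set (b := y (S N)) in *.
    assert (Hk : 2 * Sm * a * b <= X * b * b + Y * a * a).
    { assert (H1 : (2*Sm*a*b)^2 <= (X*b*b + Y*a*a)^2).
      { assert (0 <= (X*b*b - Y*a*a)^2) by apply pow2_ge_0.
        assert ((2*Sm*a*b)^2 = 4*(Sm*Sm)*(a*a*b*b)) by ring.
        assert (4*(Sm*Sm)*(a*a*b*b) <= 4*(X*Y)*(a*a*b*b)).
        { apply Rmult_le_compat_r; [nra|nra]. }
        nra. }
      assert (0 <= X*b*b + Y*a*a) by nra.
      destruct (Rle_or_lt (2*Sm*a*b) 0); [lra|].
      nra. }
    nra.
Qed.

Lemma qpoch_add (a q : R) (j k : nat) :
  qpoch a q (j + k) = qpoch a q j * qpoch (a * q ^ j) q k.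
Proof.
  induction k as [|k IH]; simpl.
  - rewrite Nat.add_0_r. ring.
  - rewrite Nat.add_succ_r. simpl. rewrite IH, pow_add. ring.
Qed.

Lemma qpoch_succ_l (a q : R) (k : nat) :
  qpoch a q (S k) = (1 - a) * qpoch (a * q) q k.
Proof.
  change (S k) with (1 + k)%nat. rewrite qpoch_add. simpl. ring_simplify.
  replace (a * (q * 1)) with (a * q) by ring. ring.
Qed.

Lemma qpoch_zero (a q : R) (m j : nat) :
  a * q ^ m = 1 -> (m < j)%nat -> qpoch a q j = 0.
Proof.
  intros H. induction j as [|j IH]; intros Hj.
  - lia.
  - simpl. destruct (Nat.eq_dec m j) as [E|E].
    + subst. rewrite H. ring.
    + rewrite IH by lia. ring.
Qed.

Lemma pow_le1 (q : R) (i : nat) : 0 < q < 1 -> 0 < q ^ i <= 1.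
Proof.
  intros Hq. induction i; simpl; nra.
Qed.

Lemma qpoch_pos (a q : R) (k : nat) :
  0 <= a < 1 -> 0 < q < 1 -> 0 < qpoch a q k.
Proof.
  intros Ha Hq. induction k; simpl.
  - lra.
  - pose proof (pow_le1 q k Hq). apply Rmult_lt_0_compat; nra.
Qed.

Definition tau (q : R) (N : nat) : R := Rpower q (choose2 N).

Lemma choose2_S (N : nat) : choose2 (S N) = choose2 N + INR N.
Proof. unfold choose2. rewrite S_INR. field. Qed.

Lemma choose2_add (j k : nat) :
  choose2 (j + k) = choose2 j + choose2 k + INR j * INR k.
Proof. unfold choose2. rewrite plus_INR. field. Qed.

Lemma tau_pos (q : R) (N : nat) : 0 < tau q N.
Proof. unfold tau, Rpower. apply exp_pos. Qed.

Lemma tau_0 (q : R) : 0 < q -> tau q 0 = 1.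
Proof. intros. unfold tau, choose2. simpl. replace (0 * (0 - 1) / 2) with 0 by field.
  apply Rpower_O; auto. Qed.

Lemma tau_S (q : R) (N : nat) : 0 < q -> tau q (S N) = tau q N * q ^ N.
Proof. intros. unfold tau. rewrite choose2_S, Rpower_plus, Rpower_pow; auto. Qed.

Lemma tau_add (q : R) (j k : nat) : 0 < q ->
  tau q (j + k) = tau q j * tau q k * q ^ (j * k).
Proof. intros. unfold tau. rewrite choose2_add, !Rpower_plus, <- mult_INR, Rpower_pow; auto. Qed.

Lemma tau_sq (q : R) (m : nat) : 0 < q -> tau q m ^ 2 * q ^ m = q ^ (m * m).
Proof.
  intros Hq. induction m as [|m IH].
  - rewrite tau_0; auto. simpl. ring.
  - rewrite tau_S by auto.
    replace (S m * S m)%nat with (m * m + (2 * m + 1))%nat by lia.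
    rewrite pow_add, <- IH. simpl. rewrite !pow_add. simpl. ring.
Qed.

Definition cc (q : R) (m j : nat) : R := qpoch (/ q ^ m) q j / qpoch q q j.
Definition ff (q : R) (m n : nat) (z : R) : R :=
  sum_f_R0 (fun j => cc q m j * z ^ j) n.
Definition TT (q : R) (m n t k : nat) (b : R) : R :=
  sum_f_R0 (fun j => cc q m j * (q ^ t) ^ j * qpoch (b * q ^ j) q k) n.

Section S.
Variable q : R.
Hypothesis Hq : 0 < q < 1.

Lemma qqpos (j : nat) : 0 < qpoch q q j.
Proof. apply qpoch_pos; lra. Qed.

Lemma xqm (m : nat) : / q ^ m * q ^ m = 1.
Proof. field. apply pow_nonzero. lra. Qed.

Lemma cc_rec (m j : nat) :
  cc q m (S j) * (1 - q ^ S j) = cc q m j * (1 - / q ^ m * q ^ j).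
Proof.
  unfold cc. simpl qpoch. pose proof (qqpos j).
  assert (q ^ S j < 1) by (apply pow_lt_1_compat; lia || lra).
  assert (0 < q ^ S j) by (apply pow_lt; lra).
  simpl in *. field. split; [apply pow_nonzero; lra|]. split; lra.
Qed.

Lemma cc_zero (m j : nat) : (m < j)%nat -> cc q m j = 0.
Proof.
  intros H. unfold cc. rewrite (qpoch_zero _ _ m j) by (apply xqm || lia). unfold Rdiv. ring.
Qed.

Lemma cc_0 (m : nat) : cc q m 0 = 1.
Proof. unfold cc. simpl. field. Qed.

Lemma ff_func (m n : nat) (z : R) : (m <= n)%nat ->
  ff q m n z * (1 - z) = (1 - / q ^ m * z) * ff q m n (q * z).
Proof.
  intros Hmn. unfold ff.
  set (g := fun i => cc q m i * (1 - q ^ i) * z ^ i).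
  assert (E1 : sum_f_R0 (fun j => cc q m j * (1 - / q ^ m * q ^ j) * z ^ (S j)) n
               = sum_f_R0 g n).
  { transitivity (sum_f_R0 (fun j => g (S j)) n).
    - apply sum_eq. intros j _. unfold g. rewrite cc_rec. reflexivity.
    - assert (H1 := decomp_sum g (S n) ltac:(lia)). simpl pred in H1.
      rewrite tech5 in H1.
      assert (g 0%nat = 0) by (unfold g; simpl; ring).
      assert (g (S n) = 0) by (unfold g; rewrite cc_zero by lia; ring).
      lra. }
  assert (E2 : sum_f_R0 g n = sum_f_R0 (fun j => cc q m j * z ^ j) n
     - sum_f_R0 (fun j => cc q m j * (q * z) ^ j) n).
  { rewrite <- minus_sum. apply sum_eq. intros. unfold g. rewrite Rpow_mult_distr. ring. }
  assert (E3 : sum_f_R0 (fun j => cc q m j * (1 - / q ^ m * q ^ j) * z ^ (S j)) n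
     = z * sum_f_R0 (fun j => cc q m j * z ^ j) n
       - / q ^ m * z * sum_f_R0 (fun j => cc q m j * (q * z) ^ j) n).
  { rewrite <- !sum_scal_l, <- minus_sum. apply sum_eq. intros.
    rewrite Rpow_mult_distr. simpl. ring. }
  lra.
Qed.

Lemma ff_vanish (m n t : nat) : (m <= n)%nat -> (1 <= t <= m)%nat ->
  ff q m n (q ^ t) = 0.
Proof.
  intros Hmn Ht.
  remember (m - t)%nat as p eqn:Hp. revert t Ht Hp.
  induction p as [|p IH]; intros t Ht Hp.
  - assert (t = m) by lia. subst t.
    pose proof (ff_func m n (q ^ m) Hmn) as F.
    rewrite xqm in F.
    assert (q ^ m < 1) by (apply pow_lt_1_compat; lia || lra).
    assert (ff q m n (q ^ m) * (1 - q ^ m) = 0) by lra.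
    apply Rmult_integral in H0. destruct H0; lra.
  - pose proof (ff_func m n (q ^ t) Hmn) as F.
    replace (q * q ^ t) with (q ^ S t) in F by reflexivity.
    rewrite (IH (S t)) in F by lia.
    assert (q ^ t < 1) by (apply pow_lt_1_compat; lia || lra).
    assert (ff q m n (q ^ t) * (1 - q ^ t) = 0) by lra.
    apply Rmult_integral in H0. destruct H0; lra.
Qed.

Lemma TT_rec (m n t k : nat) (b : R) :
  TT q m n t (S k) b = TT q m n t k (b * q) - b * TT q m n (S t) k (b * q).
Proof.
  unfold TT. rewrite <- sum_scal_l, <- minus_sum. apply sum_eq. intros j _.
  rewrite qpoch_succ_l. simpl pow at 3.
  replace (b * q ^ j * q) with (b * q * q ^ j) by ring.
  replace (q ^ S t) with (q * q ^ t) by reflexivity. rewrite Rpow_mult_distr. ring.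
Qed.

Lemma TT_vanish (m n : nat) : (m <= n)%nat ->
  forall k t b, (1 <= t)%nat -> (t + k <= m)%nat -> TT q m n t k b = 0.
Proof.
  intros Hmn k. induction k as [|k IH]; intros t b Ht Htk.
  - unfold TT. rewrite <- (ff_vanish m n t Hmn) by lia. unfold ff.
    apply sum_eq. intros. simpl. ring.
  - rewrite TT_rec, !IH by lia. ring.
Qed.

Lemma TT0 (m n : nat) : (m <= n)%nat ->
  forall k b, (k <= m)%nat -> TT q m n 0 k b = ff q m n 1.
Proof.
  intros Hmn k. induction k as [|k IH]; intros b Hk.
  - unfold TT, ff. apply sum_eq. intros. simpl. ring.
  - rewrite TT_rec, IH, (TT_vanish m n Hmn) by lia. ring.
Qed.

Lemma ff1 (m n : nat) : (m <= n)%nat -> ff q m n 1 = qpoch (/ q ^ m) q m.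
Proof.
  intros Hmn. rewrite <- (TT0 m n Hmn m (/ q ^ m)) by lia. unfold TT.
  rewrite (sum_single _ 0) by (lia || (intros j Hj Hj0;
    destruct (le_lt_dec j m) as [Hjm|Hjm];
    [ rewrite (qpoch_zero _ _ (m - j) m); [ring| |lia];
      rewrite Rmult_assoc, <- pow_add; replace (j + (m - j))%nat with m by lia; apply Rinv_l; apply pow_nonzero; lra
    | rewrite cc_zero by lia; ring ])).
  rewrite cc_0. simpl. rewrite !Rmult_1_r, Rmult_1_l. reflexivity.
Qed.
End S.

Definition Lc (q : R) (m k : nat) : R :=
  qpoch (/ q ^ m) q k * (-1) ^ k * q ^ (m * k) / (tau q k * qpoch q q k).

Section S.
Variable q : R.
Hypothesis Hq : 0 < q < 1.

Lemma Lc_0 (m : nat) : Lc q m 0 = 1.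
Proof. unfold Lc. rewrite tau_0 by lra. simpl. rewrite Nat.mul_0_r. simpl. field. Qed.

Lemma Lc_zero (m k : nat) : (m < k)%nat -> Lc q m k = 0.
Proof.
  intros H. unfold Lc. rewrite (qpoch_zero _ _ m k); [|apply xqm; lra|lia].
  unfold Rdiv. ring.
Qed.

Lemma Lc_pascal (m k : nat) :
  Lc q (S m) (S k) = q ^ S k * Lc q m (S k) + Lc q m k.
Proof.
  unfold Lc. rewrite qpoch_succ_l. rewrite !tau_S by lra.
  replace (/ q ^ S m * q) with (/ q ^ m) by (simpl; field; split; [apply pow_nonzero|]; lra).
  simpl qpoch.
  replace (S m * S k)%nat with (m * k + m + k + 1)%nat by lia.
  replace (m * S k)%nat with (m * k + m)%nat by lia.
  rewrite !pow_add. simpl.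
  pose proof (qqpos q Hq k). pose proof (tau_pos q k).
  assert (q ^ k > 0) by (apply pow_lt; lra).
  assert (q ^ m > 0) by (apply pow_lt; lra).
  assert (q * q ^ k < 1) by (pose proof (pow_le1 q k Hq); nra).
  field. repeat split; lra.
Qed.

Lemma Lc_nonneg (m k : nat) : 0 <= Lc q m k.
Proof.
  revert k. induction m as [|m IH]; intros k.
  - destruct k. rewrite Lc_0; lra. rewrite Lc_zero by lia; lra.
  - destruct k. rewrite Lc_0; lra.
    rewrite Lc_pascal. pose proof (IH (S k)). pose proof (IH k).
    assert (0 < q ^ S k) by (apply pow_lt; lra). nra.
Qed.

Lemma Lc_mm (m : nat) : Lc q m m = 1.
Proof.
  induction m as [|m IH]. apply Lc_0.
  rewrite Lc_pascal, IH, Lc_zero by lia. ring.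
Qed.

Definition gg (a : R) (k : nat) : R := tau q k ^ 2 * a ^ k / qpoch a q k.

Lemma gg_step (a : R) (k : nat) : 0 <= a < 1 ->
  q ^ k * gg a k + gg a (S k) = gg (a * q) k / (1 - a).
Proof.
  intros Ha. unfold gg.
  assert (E : qpoch (a * q) q k = qpoch a q (S k) / (1 - a)).
  { rewrite qpoch_succ_l. field. lra. }
  rewrite E. rewrite tau_S by lra. simpl qpoch.
  pose proof (qpoch_pos a q k Ha Hq).
  assert (0 < q ^ k <= 1) by (apply pow_le1; lra).
  assert (a * q ^ k < 1) by nra.
  rewrite (Rpow_mult_distr a q k). simpl. field. repeat split; try lra. 
Qed.

Lemma R_identity (m : nat) : forall a, 0 <= a < 1 ->
  sum_f_R0 (fun k => Lc q m k * gg a k) m = / qpoch a q m.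
Proof.
  induction m as [|m IH]; intros a Ha.
  - simpl. rewrite Lc_0. unfold gg. rewrite tau_0 by lra. simpl. field.
  - rewrite (decomp_sum _ (S m)) by lia. simpl pred.
    rewrite (sum_eq _ (fun j => q ^ S j * Lc q m (S j) * gg a (S j)
                               + Lc q m j * gg a (S j))) by
      (intros; rewrite Lc_pascal; ring).
    rewrite sum_plus.
    assert (E1 : Lc q (S m) 0 * gg a 0 +
      sum_f_R0 (fun j => q ^ S j * Lc q m (S j) * gg a (S j)) m
      = sum_f_R0 (fun k => q ^ k * Lc q m k * gg a k) m).
    { pose proof (decomp_sum (fun k => q ^ k * Lc q m k * gg a k) (S m) ltac:(lia)) as D1.
      pose proof (tech5 (fun k => q ^ k * Lc q m k * gg a k) m) as D2.
      simpl pred in D1. cbv beta in D1, D2. rewrite (Lc_zero m (S m)) in D2 by lia.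
      rewrite !Lc_0 in *. rewrite pow_O in D1. lra. }
    assert (E2 : sum_f_R0 (fun k => q ^ k * Lc q m k * gg a k) m
      + sum_f_R0 (fun j => Lc q m j * gg a (S j)) m
      = sum_f_R0 (fun k => Lc q m k * gg (a * q) k) m / (1 - a)).
    { rewrite <- sum_plus. unfold Rdiv. rewrite Rmult_comm, <- sum_scal_l.
      apply sum_eq. intros k _. replace (gg (a * q) k) with (gg (a*q) k / (1 - a) * (1 - a)) by (field; lra). rewrite <- (gg_step a k Ha). field. lra. }
    assert (0 <= a * q < 1) by nra.
    rewrite IH in E2 by auto.
    rewrite qpoch_succ_l.
    pose proof (qpoch_pos (a*q) q m H Hq).
    rewrite <- Rplus_assoc, E1, E2. field. lra.
Qed.
End S.

Lemma sum_update (C : nat -> R) (w : nat -> R) (k0 n : nat) (dl : R) :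
  (k0 <= n)%nat ->
  sum_f_R0 (fun m => C m * (w m + (if Nat.eq_dec m k0 then dl else 0))) n
  = sum_f_R0 (fun m => C m * w m) n + C k0 * dl.
Proof.
  intros H.
  rewrite (sum_eq _ (fun m => C m * w m + C m * (if Nat.eq_dec m k0 then dl else 0)))
    by (intros; ring).
  rewrite sum_plus. f_equal.
  rewrite (sum_single _ k0).
  - destruct (Nat.eq_dec k0 k0); [ring|lia].
  - exact H.
  - intros k _ Hk. destruct (Nat.eq_dec k k0); [lia|ring].
Qed.

Lemma sum_prod (f g : nat -> R) (N M : nat) :
  sum_f_R0 f N * sum_f_R0 g M = sum_f_R0 (fun i => sum_f_R0 (fun j => f i * g j) M) N.
Proof.
  rewrite Rmult_comm, scal_sum. apply sum_eq. intros. rewrite <- sum_scal_l.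
  apply sum_eq. intros. ring.
Qed.

Lemma tri_solve (n : nat) (C : nat -> nat -> R) (v : nat -> R) :
  (forall m, (m <= n)%nat -> C m m <> 0) ->
  (forall m k, (m <= n)%nat -> (k <= n)%nat -> (m < k)%nat -> C m k = 0) ->
  exists w, forall k, (k <= n)%nat -> v k = sum_f_R0 (fun m => C m k * w m) n.
Proof.
  intros Hd Ht.
  assert (P : forall p, (p <= S n)%nat -> exists w,
     (forall m, (m <= n)%nat -> (m + p < S n)%nat -> w m = 0) /\
     (forall k, (k <= n)%nat -> (S n <= k + p)%nat ->
        v k = sum_f_R0 (fun m => C m k * w m) n)).
  { induction p as [|p IH]; intros Hp.
    - exists (fun _ => 0). split; [auto|intros; lia].
    - destruct (IH ltac:(lia)) as [w [Hw1 Hw2]].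
      set (k0 := (n - p)%nat).
      set (dl := (v k0 - sum_f_R0 (fun m => C m k0 * w m) n) / C k0 k0).
      exists (fun m => w m + (if Nat.eq_dec m k0 then dl else 0)). split.
      + intros m Hm Hmp. destruct (Nat.eq_dec m k0); [lia|]. rewrite Hw1 by lia. ring.
      + intros k Hk Hkp.
        rewrite (sum_update (fun m => C m k)) by (unfold k0; lia).
        destruct (Nat.eq_dec k k0) as [E|E].
        * subst k. unfold dl. field. apply Hd. unfold k0; lia.
        * rewrite (Ht k0 k) by (unfold k0 in *; lia). rewrite <- Hw2 by (unfold k0 in *; lia). ring. }
  destruct (P (S n) ltac:(lia)) as [w [_ Hw]]. exists w. intros k Hk. apply Hw; lia.
Qed.

Lemma LA (n : nat) (A C : nat -> nat -> R) (d : nat -> R) (lam : R) (v : nat -> R) :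
  (forall m, (m <= n)%nat -> 0 < d m) ->
  (forall m, (m <= n)%nat -> C m m <> 0) ->
  (forall m k, (m <= n)%nat -> (k <= n)%nat -> (m < k)%nat -> C m k = 0) ->
  (forall m l, (m <= n)%nat -> (l <= n)%nat ->
     sum_f_R0 (fun j => sum_f_R0 (fun k => C m j * A j k * C l k) n) n
     = if Nat.eq_dec m l then d m else 0) ->
  (exists i, (i <= n)%nat /\ v i <> 0) ->
  (forall j, (j <= n)%nat -> sum_f_R0 (fun k => A j k * v k) n = lam * v j) ->
  1 <= lam * sum_f_R0 (fun m => sum_f_R0 (fun k => C m k ^ 2) n / d m) n.
Proof.
  intros Hdpos Hdiag Htri Horth [i [Hi Hvi]] Heig.
  destruct (tri_solve n C v Hdiag Htri) as [w Hw].
  set (Vv := sum_f_R0 (fun k => v k ^ 2) n).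
  assert (HV : 0 < Vv).
  { unfold Vv. assert (0 < v i ^ 2) by (pose proof (Rsqr_pos_lt _ Hvi) as Hs; unfold Rsqr in Hs; simpl; lra).
    clear -Hi H. induction n.
    - assert (i = 0%nat) by lia. subst. simpl. lra.
    - rewrite tech5. destruct (Nat.eq_dec i (S n)).
      + subst. pose proof (sum_nonneg (fun k => v k ^ 2) n ltac:(intros; apply pow2_ge_0)). lra.
      + pose proof (IHn ltac:(lia)). pose proof (pow2_ge_0 (v (S n))). lra. }
  set (W := sum_f_R0 (fun m => d m * w m ^ 2) n).
  assert (E1 : lam * Vv = W).
  { transitivity (sum_f_R0 (fun j => v j * sum_f_R0 (fun k => A j k * v k) n) n).
    - unfold Vv. rewrite <- sum_scal_l. apply sum_eq. intros j Hj. rewrite Heig by auto. ring.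
    - transitivity (sum_f_R0 (fun j => sum_f_R0 (fun k =>
          sum_f_R0 (fun m => sum_f_R0 (fun l =>
            w m * w l * (C m j * A j k * C l k)) n) n) n) n).
      + apply sum_eq. intros j Hj. rewrite (Hw j) by auto. rewrite <- sum_scal_l.
        apply sum_eq. intros k Hk.
        rewrite (Hw k) by auto.
        replace (sum_f_R0 (fun m => C m j * w m) n * (A j k * sum_f_R0 (fun m => C m k * w m) n))
          with (A j k * (sum_f_R0 (fun m => C m j * w m) n * sum_f_R0 (fun m => C m k * w m) n)) by ring.
        rewrite sum_prod, <- sum_scal_l. apply sum_eq. intros m Hm.
        rewrite <- sum_scal_l. apply sum_eq. intros l Hl. ring.
      + rewrite (sum_eq _ (fun j => sum_f_R0 (fun m => sum_f_R0 (fun k => sum_f_R0 (fun l =>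
            w m * w l * (C m j * A j k * C l k)) n) n) n))
          by (intros; apply sum_swap).
        rewrite sum_swap.
        unfold W. apply sum_eq. intros m Hm.
        rewrite (sum_eq _ (fun j => sum_f_R0 (fun l => sum_f_R0 (fun k =>
            w m * w l * (C m j * A j k * C l k)) n) n))
          by (intros; apply sum_swap).
        rewrite sum_swap.
        rewrite (sum_single _ m); [ | exact Hm | ].
        2:{ intros l Hl Hlm.
          rewrite (sum_eq _ (fun j => w m * w l * sum_f_R0 (fun k => C m j * A j k * C l k) n))
            by (intros; apply sum_scal_l).
          rewrite sum_scal_l, Horth by auto. destruct (Nat.eq_dec m l); [lia|ring]. }
        rewrite (sum_eq _ (fun j => w m * w m * sum_f_R0 (fun k => C m j * A j k * C m k) n))
            by (intros; apply sum_scal_l).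
        rewrite sum_scal_l, Horth by auto. destruct (Nat.eq_dec m m); [ring|lia]. }
  set (SC := sum_f_R0 (fun m => sum_f_R0 (fun k => C m k ^ 2) n / d m) n).
  assert (E2 : Vv <= SC * W).
  { unfold Vv, SC.
    transitivity (sum_f_R0 (fun k => sum_f_R0 (fun m => C m k ^ 2 / d m) n * W) n).
    - apply sum_Rle. intros k Hk. rewrite Hw by auto.
      pose proof (cauchy_schwarz (fun m => C m k / sqrt (d m)) (fun m => sqrt (d m) * w m) n) as CS.
      rewrite (sum_eq (fun i => C i k / sqrt (d i) * (sqrt (d i) * w i)) (fun m => C m k * w m)) in CS.
      2:{ intros m Hm. pose proof (sqrt_lt_R0 _ (Hdpos m Hm)). field. lra. }
      rewrite (sum_eq (fun i => (C i k / sqrt (d i)) ^ 2) (fun m => C m k ^ 2 / d m)) in CS.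
      2:{ intros m Hm. pose proof (sqrt_lt_R0 _ (Hdpos m Hm)).
          assert (Hs : sqrt (d m) * sqrt (d m) = d m) by (apply sqrt_sqrt; pose proof (Hdpos m Hm); lra).
          set (s := sqrt (d m)) in *. rewrite <- Hs. field. lra. }
      rewrite (sum_eq (fun i => (sqrt (d i) * w i) ^ 2) (fun m => d m * w m ^ 2)) in CS.
      2:{ intros m Hm.
          assert (Hs : sqrt (d m) * sqrt (d m) = d m) by (apply sqrt_sqrt; pose proof (Hdpos m Hm); lra).
          set (s := sqrt (d m)) in *. rewrite <- Hs. ring. }
      exact CS.
    - rewrite <- scal_sum.
      assert (ES : sum_f_R0 (fun k => sum_f_R0 (fun m => C m k ^ 2 / d m) n) n
         = sum_f_R0 (fun m => sum_f_R0 (fun k => C m k ^ 2) n / d m) n).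
      { rewrite sum_swap. apply sum_eq. intros m Hm. unfold Rdiv.
        rewrite (Rmult_comm _ (/ d m)), scal_sum. reflexivity. }
      rewrite ES. right. ring. }
  assert (Vv <= SC * (lam * Vv)) by (rewrite E1; exact E2).
  assert (1 <= SC * lam).
  { apply (Rmult_le_reg_r Vv); auto. nra. }
  fold SC. lra.
Qed.

Definition ec (q a : R) (m k : nat) : R :=
  qpoch (/ q ^ m) q k * tau q k * a ^ k * q ^ (m * k) / (qpoch q q k * qpoch a q k).
Definition sN (q a : R) (N : nat) : R := qpoch a q N / (tau q N * a ^ N).

Lemma neg1sq (m : nat) : (-1) ^ m * (-1) ^ m = 1.
Proof. rewrite <- Rpow_mult_distr. replace (-1 * -1) with 1 by ring. apply pow1. Qed.

Section S.
Variables q a : R.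
Hypothesis Hq : 0 < q < 1.
Hypothesis Ha : 0 < a < 1.

Lemma aqpos (k : nat) : 0 < qpoch a q k.
Proof. apply qpoch_pos; lra. Qed.

Lemma ec_sign (m k : nat) : ec q a m k * (-1) ^ k = Lc q m k * gg q a k.
Proof.
  unfold ec, Lc, gg. pose proof (tau_pos q k). pose proof (qqpos q Hq k). pose proof (aqpos k).
  field. repeat split; lra.
Qed.

Lemma ec_zero (m k : nat) : (m < k)%nat -> ec q a m k = 0.
Proof.
  intros H. unfold ec. rewrite (qpoch_zero _ _ m k); [|apply xqm; lra|lia]. unfold Rdiv; ring.
Qed.

Lemma gg_pos (k : nat) : 0 < gg q a k.
Proof.
  unfold gg. pose proof (tau_pos q k). pose proof (aqpos k).
  assert (0 < a ^ k) by (apply pow_lt; lra).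
  apply Rdiv_lt_0_compat; [|lra]. apply Rmult_lt_0_compat; [|lra]. apply pow_lt; lra.
Qed.

Lemma ec_diag (m : nat) : ec q a m m <> 0.
Proof.
  intro H. pose proof (ec_sign m m). rewrite H, Lc_mm in H0 by lra.
  pose proof (gg_pos m). lra.
Qed.

Lemma ec_alt_sum (m n : nat) : (m <= n)%nat ->
  sum_f_R0 (fun k => ec q a m k * (-1) ^ k) n = / qpoch a q m.
Proof.
  intros Hmn. rewrite (sum_zero_beyond _ m n Hmn)
    by (intros k Hk; rewrite ec_zero by lia; ring).
  rewrite <- (R_identity q Hq m a) by lra. apply sum_eq. intros. apply ec_sign.
Qed.

Lemma O_formula (m n k : nat) : (k <= m)%nat ->
  sum_f_R0 (fun j => ec q a m j * sN q a (j + k)) n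
  = TT q m n (m - k) k a / (tau q k * a ^ k).
Proof.
  intros Hkm. unfold TT, Rdiv. rewrite (Rmult_comm _ (/ _)), scal_sum.
  apply sum_eq. intros j _.
  unfold ec, sN, cc. rewrite qpoch_add, tau_add by lra.
  assert (E : q ^ (m * j) = (q ^ (m - k)) ^ j * q ^ (j * k)).
  { rewrite <- pow_mult, <- pow_add. f_equal. nia. }
  rewrite E, pow_add.
  pose proof (tau_pos q k). pose proof (tau_pos q j). pose proof (qqpos q Hq j). pose proof (aqpos j).
  assert (0 < a ^ j) by (apply pow_lt; lra). assert (0 < a ^ k) by (apply pow_lt; lra).
  assert (0 < q ^ (j * k)) by (apply pow_lt; lra).
  field. repeat split; lra.
Qed.

Definition dd (m : nat) : R := qpoch q q m / (q ^ m * qpoch a q m).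

Lemma d_value (m n : nat) : (m <= n)%nat ->
  ec q a m m * sum_f_R0 (fun j => ec q a m j * sN q a (j + m)) n = dd m.
Proof.
  intros Hmn. rewrite O_formula by lia. rewrite Nat.sub_diag.
  rewrite (TT0 q Hq m n Hmn m a) by lia. rewrite ff1 by (lra || lia).
  pose proof (Lc_mm q Hq m) as L. unfold Lc in L.
  unfold ec, dd.
  pose proof (tau_pos q m). pose proof (qqpos q Hq m). pose proof (aqpos m).
  assert (0 < a ^ m) by (apply pow_lt; lra).
  assert (0 < q ^ m) by (apply pow_lt; lra).
  assert (EX : qpoch (/ q ^ m) q m = tau q m * qpoch q q m / ((-1) ^ m * q ^ (m * m))).
  { assert ((-1) ^ m * (-1) ^ m = 1) by (apply neg1sq).
    assert (0 < q ^ (m * m)) by (apply pow_lt; lra).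
    assert ((-1) ^ m <> 0) by (intro Z; rewrite Z in H4; lra).
    transitivity ((qpoch (/ q ^ m) q m * (-1) ^ m * q ^ (m * m) / (tau q m * qpoch q q m))
       * (tau q m * qpoch q q m / ((-1) ^ m * q ^ (m * m)))).
    - field. repeat split; lra.
    - rewrite L. ring. }
  rewrite EX. rewrite <- (tau_sq q m) by lra.
  assert ((-1) ^ m * (-1) ^ m = 1) by (apply neg1sq).
  assert ((-1) ^ m <> 0) by (intro Z; rewrite Z in H4; lra).
  field_simplify; [| repeat split; lra ..].
  replace (((-1) ^ m) ^ 2) with 1 by (rewrite <- H4; ring). field. lra.
Qed.

Definition GG (n m l : nat) : R :=
  sum_f_R0 (fun j => sum_f_R0 (fun k => ec q a m j * sN q a (j + k) * ec q a l k) n) n.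

Lemma GG_eq (n m l : nat) :
  GG n m l = sum_f_R0 (fun k => ec q a l k * sum_f_R0 (fun j => ec q a m j * sN q a (j + k)) n) n.
Proof.
  unfold GG. rewrite sum_swap. apply sum_eq. intros k _. rewrite <- sum_scal_l.
  apply sum_eq. intros. ring.
Qed.

Lemma GG_sym (n m l : nat) : GG n m l = GG n l m.
Proof.
  unfold GG. rewrite sum_swap. apply sum_eq. intros. apply sum_eq. intros.
  rewrite Nat.add_comm. ring.
Qed.

Lemma sum_zeros (f : nat -> R) (N : nat) :
  (forall k, (k <= N)%nat -> f k = 0) -> sum_f_R0 f N = 0.
Proof.
  intros H. rewrite (sum_eq _ (fun _ => 0)) by auto. rewrite sum_cte. ring.
Qed.

Lemma GG_low (n m l : nat) : (l <= m)%nat -> (m <= n)%nat ->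
  GG n m l = if Nat.eq_dec m l then dd m else 0.
Proof.
  intros Hlm Hmn. rewrite GG_eq.
  assert (Hz : forall k, (k <= n)%nat -> k <> m -> ec q a l k *
     sum_f_R0 (fun j => ec q a m j * sN q a (j + k)) n = 0).
  { intros k Hk Hkm. destruct (le_lt_dec k l) as [Hkl|Hkl].
    - rewrite O_formula by lia. rewrite (TT_vanish q Hq m n Hmn) by lia. unfold Rdiv. ring.
    - rewrite ec_zero by lia. ring. }
  destruct (Nat.eq_dec m l) as [E|E].
  - subst l. rewrite (sum_single _ m); [ | lia | exact Hz]. apply d_value. auto.
  - apply sum_zeros. intros k Hk. destruct (Nat.eq_dec k m).
    + subst k. rewrite ec_zero by lia. ring.
    + apply Hz; auto.
Qed.

Lemma GG_orth (n m l : nat) : (m <= n)%nat -> (l <= n)%nat ->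
  GG n m l = if Nat.eq_dec m l then dd m else 0.
Proof.
  intros Hm Hl. destruct (le_lt_dec l m).
  - apply GG_low; auto.
  - rewrite GG_sym, GG_low by lia. destruct (Nat.eq_dec l m); destruct (Nat.eq_dec m l); try lia. reflexivity.
Qed.

Lemma dd_pos (m : nat) : 0 < dd m.
Proof.
  unfold dd. pose proof (qqpos q Hq m). pose proof (aqpos m).
  assert (0 < q ^ m) by (apply pow_lt; lra).
  apply Rdiv_lt_0_compat; auto. apply Rmult_lt_0_compat; auto.
Qed.

Lemma row_bound (m n : nat) : (m <= n)%nat ->
  sum_f_R0 (fun k => ec q a m k ^ 2) n / dd m
  <= q ^ m / (qpoch q q m * qpoch a q m).
Proof.
  intros Hmn.
  assert (H1 : sum_f_R0 (fun k => ec q a m k ^ 2) n <= (/ qpoch a q m) ^ 2).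
  { rewrite <- (ec_alt_sum m n Hmn).
    rewrite (sum_eq (fun k => ec q a m k ^ 2) (fun k => (ec q a m k * (-1) ^ k) ^ 2)).
    - apply sum_sq_le. intros k Hk. rewrite ec_sign.
      pose proof (Lc_nonneg q Hq m k). pose proof (gg_pos k). nra.
    - intros k Hk. rewrite Rpow_mult_distr. replace (((-1) ^ k) ^ 2) with ((-1) ^ k * (-1) ^ k) by ring.
      rewrite neg1sq. ring. }
  pose proof (dd_pos m). pose proof (qqpos q Hq m). pose proof (aqpos m).
  assert (0 < q ^ m) by (apply pow_lt; lra).
  apply (Rmult_le_compat_r (/ dd m)) in H1; [|left; apply Rinv_0_lt_compat; auto].
  unfold Rdiv at 1. eapply Rle_trans; [exact H1|]. right. unfold dd. field. repeat split; lra.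
Qed.
End S.

Lemma a_bounds (q alpha : R) : 0 < q < 1 -> -1 < alpha ->
  0 < Rpower q (alpha + 1) < 1.
Proof.
  intros Hq Hal. split.
  - unfold Rpower. apply exp_pos.
  - assert (Rpower 1 (alpha + 1) = 1) by (unfold Rpower; rewrite ln_1, Rmult_0_r; apply exp_0).
    rewrite <- H at 2. apply Rlt_Rpower_l; lra.
Qed.

Lemma hankel_eq (q alpha : R) (j k : nat) : 0 < q ->
  hankelA q alpha j k = sN q (Rpower q (alpha + 1)) (j + k).
Proof.
  intros Hq. unfold hankelA, sN.
  replace (j + k + 1)%nat with (S (j + k)) by lia.
  set (N := (j + k)%nat). rewrite choose2_S.
  replace (- (choose2 N + INR N) - alpha * INR N)
    with (- choose2 N + - ((alpha + 1) * INR N)) by ring.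
  rewrite (Rpower_plus (- choose2 N)), !Rpower_Ropp, <- Rpower_mult, Rpower_pow by (unfold Rpower; apply exp_pos).
  unfold tau. assert (0 < Rpower q (choose2 N)) by (unfold Rpower; apply exp_pos). assert (0 < Rpower q (alpha+1) ^ N) by (apply pow_lt; unfold Rpower; apply exp_pos). field. lra.
Qed.

Lemma ell_term (q alpha : R) (m k : nat) : 0 < q < 1 -> 0 < Rpower q (alpha + 1) < 1 ->
  qpoch (Rpower q (- INR m)) q k * Rpower q (choose2 (k + 1))
    * Rpower q ((alpha + INR m) * INR k) * (-1) ^ k
    / (qpoch q q k * qpoch (Rpower q (alpha + 1)) q k)
  = ec q (Rpower q (alpha + 1)) m k * (-1) ^ k.
Proof.
  intros Hq' Ha. assert (Hq : 0 < q) by lra. unfold ec.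
  pose proof (qqpos q Hq' k). pose proof (qpoch_pos (Rpower q (alpha + 1)) q k ltac:(lra) Hq').
  rewrite Rpower_Ropp, Rpower_pow by auto.
  replace (k + 1)%nat with (S k) by lia. fold (tau q (S k)). rewrite tau_S by auto.
  replace ((alpha + INR m) * INR k) with ((alpha + 1) * INR k + INR (m * k) + - INR k)
    by (rewrite mult_INR; ring).
  rewrite (Rpower_plus ((alpha + 1) * INR k + INR (m * k))), (Rpower_plus ((alpha + 1) * INR k)).
  rewrite Rpower_Ropp, <- Rpower_mult, !Rpower_pow by (auto || (unfold Rpower; apply exp_pos)).
  assert (0 < q ^ k) by (apply pow_lt; auto).
  field. repeat split; lra.
Qed.

Theorem mainTheorem10 (q alpha : R) (n : nat) :
  0 < q < 1 -> -1 < alpha ->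
  (forall lam_s : R,
     is_smallest_eigenvalue n (hankelA q alpha) lam_s ->
     lam_s >= / sum_f_R0 (fun m =>
        q ^ m / (qpoch q q m * qpoch (Rpower q (alpha + 1)) q m)) n)
  /\
  (forall m : nat,
     (ell q alpha m (-1)) ^ 2
     = q ^ m / (qpoch q q m * qpoch (Rpower q (alpha + 1)) q m)).
Proof.
  intros Hq Hal. pose proof (a_bounds q alpha Hq Hal) as Ha.
  split.
  - intros lam [[v [Hv Heig]] _].
    set (a := Rpower q (alpha + 1)) in *.
    assert (HL := LA n (hankelA q alpha) (ec q a) (dd q a) lam v
      ltac:(intros; apply dd_pos; lra)
      ltac:(intros; apply ec_diag; lra)
      ltac:(intros; apply ec_zero; lra || lia)).
    assert (HL' : 1 <= lam * sum_f_R0 (fun m => sum_f_R0 (fun k => ec q a m k ^ 2) n / dd q a m) n).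
    { apply HL; auto. intros m l Hm Hl. rewrite <- (GG_orth q a Hq Ha n m l Hm Hl).
      unfold GG. apply sum_eq. intros. apply sum_eq. intros. rewrite hankel_eq by lra. reflexivity. }
    clear HL.
    set (SC := sum_f_R0 (fun m => sum_f_R0 (fun k => ec q a m k ^ 2) n / dd q a m) n) in *.
    set (S := sum_f_R0 (fun m => q ^ m / (qpoch q q m * qpoch a q m)) n).
    assert (HSC : SC <= S) by (apply sum_Rle; intros; apply row_bound; lra || lia).
    assert (HSC0 : 0 <= SC).
    { apply sum_nonneg. intros m Hm. pose proof (dd_pos q a Hq Ha m).
      pose proof (sum_nonneg (fun k => ec q a m k ^ 2) n ltac:(intros; apply pow2_ge_0)).
      unfold Rdiv. apply Rmult_le_pos; [lra|]. left. apply Rinv_0_lt_compat. lra. }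
    assert (HSCp : 0 < SC).
    { destruct HSC0 as [|E]; auto. rewrite <- E in HL'. lra. }
    assert (HS : 0 < S) by lra.
    assert (Hlam : 0 < lam).
    { destruct (Rle_or_lt lam 0); auto. assert (lam * SC <= 0) by nra. lra. }
    assert (1 <= lam * S) by nra.
    apply Rle_ge. apply (Rmult_le_reg_r S); auto. rewrite Rinv_l by lra. lra.
  - intros m. unfold ell.
    set (a := Rpower q (alpha + 1)) in *.
    rewrite (sum_eq _ (fun k => ec q a m k * (-1) ^ k)) by (intros; apply ell_term; [lra|exact Ha]).
    rewrite ec_alt_sum by (lra || lia).
    pose proof (qqpos q Hq m). pose proof (aqpos q a Hq Ha m).
    assert (0 < q ^ m) by (apply pow_lt; lra).
    assert (Hs : sqrt (qpoch a q m * q ^ m / qpoch q q m) ^ 2 = qpoch a q m * q ^ m / qpoch q q m).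
    { simpl. rewrite Rmult_1_r. apply sqrt_sqrt. apply Rlt_le, Rdiv_lt_0_compat; nra. }
    rewrite !Rpow_mult_distr, Hs.
    replace (((-1) ^ m) ^ 2) with ((-1) ^ m * (-1) ^ m) by ring. rewrite neg1sq.
    field. lra.
Qed.
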